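(* Let $p,\mu\in(1,\infty)$, let $\eta:[0,\infty)\to[0,1]$ be continuous, and set $$\omega(t):=\eta(t)(1+t)^{-\mu}+(1-\eta(t))(1+t)^{p-2},\quad t\ge0,\qquad G(\xi):=\int_0^{|\xi|}\int_0^s\omega(r)\,\mathrm{d}r\,\mathrm{d}s,\quad\xi\in\mathbb{R}^2.$$ Then there are constants $c_5,c_6>0$ such that $$c_5(1+|\xi|)^{-\mu}|\zeta|^2\le D^2G(\xi)(\zeta,\zeta)\le c_6(1+|\xi|)^{p-2}|\zeta|^2\quad\text{for all }\xi,\zeta\in\mathbb{R}^2.$$ *)

(* Defs.v *)
From HB Require Import structures.
From mathcomp Require Import all_boot all_order all_algebra.
From mathcomp Require Import all_classical all_reals all_analysis.
Set Implicit Arguments. Unset Strict Implicit. Unset Printing Implicit Defensive.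
Import Order.TTheory GRing.Theory Num.Theory.
Import numFieldNormedType.Exports.
Local Open Scope classical_set_scope.
Local Open Scope ring_scope.

Definition omega (R : realType) (p mu : R) (eta : R -> R) (t : R) : R :=
  eta t * (1 + t) `^ (- mu) + (1 - eta t) * (1 + t) `^ (p - 2).

(* Euclidean norm on R^2 (MathComp's matrix norm is the sup norm). *)
Definition enorm (R : realType) (x : 'rV[R]_2) : R :=
  Num.sqrt (\sum_(i < 2) x ord0 i ^+ 2).

Definition Gfun (R : realType) (p mu : R) (eta : R -> R) (x : 'rV[R]_2) : R :=
  Rintegral lebesgue_measure `[0, enorm x]
    (fun s => Rintegral lebesgue_measure `[0, s] (omega p mu eta)).

(* Main.v *)
Require Import Defs.
From HB Require Import structures.
From mathcomp Require Import all_boot all_order all_algebra.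
From mathcomp Require Import all_classical all_reals all_analysis.
From mathcomp Require Import ring lra.
Import Order.TTheory GRing.Theory Num.Theory.
Import numFieldNormedType.Exports.
Local Open Scope classical_set_scope.
Local Open Scope ring_scope.
Section OneD.
Context {R : realType}.
Notation mu := (@lebesgue_measure R).

Lemma mu_itv0 (s : R) : 0 <= s -> fine (mu `[0, s]) = s.
Proof.
move=> s0; rewrite lebesgue_measure_itv /= lte_fin.
case: ltP => //= h; [by rewrite oppr0 addr0|by apply/eqP; rewrite eq_le s0 h].
Qed.

Lemma Rint_bounds (f : R -> R) (s a b : R) : 0 <= s ->
  {within `[0, s], continuous f} ->
  (forall r, 0 <= r <= s -> a <= f r <= b) ->
  s * a <= Rintegral mu `[0, s] f <= s * b.
Proof.
move=> s0 cf fab.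
have intf : mu.-integrable `[0, s] (EFin \o f).
  by apply: continuous_compact_integrable => //; exact: segment_compact.
have intc (c : R) : mu.-integrable `[0, s] (EFin \o cst c).
  apply: continuous_compact_integrable; first exact: segment_compact.
  by apply: continuous_subspaceT => x; exact: cst_continuous.
apply/andP; split.
- rewrite -[X in X * a]mu_itv0 // mulrC -Rintegral_cst //.
  apply: le_Rintegral; [by []| exact: intc | exact: intf |].
  by move=> r; rewrite /= in_itv /= => /fab /andP[].
- rewrite -[X in _ <= X * b]mu_itv0 // mulrC -Rintegral_cst //.
  apply: le_Rintegral; [by []| exact: intf | exact: intc |].
  by move=> r; rewrite /= in_itv /= => /fab /andP[].
Qed.

Lemma Rint_ge (f : R -> R) (s a : R) : 0 <= s ->
  {within `[0, s], continuous f} ->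
  (forall r, 0 <= r <= s -> a <= f r) -> s * a <= Rintegral mu `[0, s] f.
Proof.
move=> s0 cf fa.
have intf : mu.-integrable `[0, s] (EFin \o f).
  by apply: continuous_compact_integrable => //; exact: segment_compact.
have intc (c : R) : mu.-integrable `[0, s] (EFin \o cst c).
  apply: continuous_compact_integrable; first exact: segment_compact.
  by apply: continuous_subspaceT => x; exact: cst_continuous.
rewrite -[X in X * a]mu_itv0 // mulrC -Rintegral_cst //.
apply: le_Rintegral; [by []| exact: intc | exact: intf |].
by move=> r; rewrite /= in_itv /= => /fa.
Qed.

Lemma Rint_le (f : R -> R) (s b : R) : 0 <= s ->
  {within `[0, s], continuous f} ->
  (forall r, 0 <= r <= s -> f r <= b) -> Rintegral mu `[0, s] f <= s * b.
Proof.
move=> s0 cf fb.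
have intf : mu.-integrable `[0, s] (EFin \o f).
  by apply: continuous_compact_integrable => //; exact: segment_compact.
have intc (c : R) : mu.-integrable `[0, s] (EFin \o cst c).
  apply: continuous_compact_integrable; first exact: segment_compact.
  by apply: continuous_subspaceT => x; exact: cst_continuous.
rewrite -[X in _ <= X * b]mu_itv0 // mulrC -Rintegral_cst //.
apply: le_Rintegral; [by []| exact: intf | exact: intc |].
by move=> r; rewrite /= in_itv /= => /fb.
Qed.

Lemma is_derive_w (a x : R) : -1 < x ->
  is_derive x 1 (fun y : R => (1 + y) `^ a) (a * (1 + x) `^ (a - 1)).
Proof.
move=> x1.
have hg : is_derive x 1 (fun y : R => 1 + y) 1.
  have -> : (fun y : R => 1 + y) = shift 1 by apply/funext => y /=; rewrite addrC.
  by apply: is_derive_shift.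
have hf : is_derive (1 + x) 1 (fun y : R => y `^ a) (a * (1 + x) `^ (a - 1)).
  by apply: is_derive1_powR; rewrite -ltrBlDl sub0r.
have := is_derive1_comp hf hg; rewrite mulr1; exact.
Qed.

Lemma powR_cont (a x : R) : 0 < x -> {for x, continuous (fun y : R => y `^ a)}.
Proof.
move=> x0; apply/differentiable_continuous/derivable1_diffP.
by apply: derivable_powR; rewrite in_itv /= andbT.
Qed.

Lemma w_cont (a t : R) : -1 < t -> {for t, continuous (fun t : R => (1 + t) `^ a)}.
Proof.
move=> t1; apply: (continuous_comp (f := fun t : R => 1 + t) (g := fun y : R => y `^ a)).
  by apply: continuousD; [exact: cst_continuous | move=> ?].
by apply: powR_cont; rewrite -ltrBlDl sub0r.
Qed.

Lemma powR_le_base (a x y : R) : 0 <= a -> 0 < x -> x <= y -> x `^ a <= y `^ a.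
Proof.
move=> a0 x0 xy; apply: ge0_ler_powR => //; rewrite nnegrE ?(ltW x0) //.
exact: le_trans (ltW x0) xy.
Qed.

Lemma powR_ge_base (a x y : R) : a <= 0 -> 0 < x -> x <= y -> y `^ a <= x `^ a.
Proof.
move=> a0 x0 xy; rewrite /powR !gt_eqF //; last exact: lt_le_trans xy.
by rewrite ler_expR ler_wnM2l // ler_ln // posrE (lt_le_trans x0).
Qed.

End OneD.

Section Vec.
Context {R : realType}.
Notation V := 'rV[R]_2.

Lemma mul_self_ge0 (a : R) : 0 <= a * a.
Proof. by rewrite -expr2 sqr_ge0. Qed.

Definition dot (x y : V) : R := \sum_(i < 2) x ord0 i * y ord0 i.

Lemma dot_ge0 (x : V) : 0 <= dot x x.
Proof. by apply: sumr_ge0 => i _; rewrite mul_self_ge0. Qed.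

Lemma enormE (x : V) : enorm x = Num.sqrt (dot x x).
Proof. by rewrite /enorm /dot; congr Num.sqrt; apply: eq_bigr => i _; rewrite expr2. Qed.

Lemma enorm_ge0 (x : V) : 0 <= enorm x.
Proof. by rewrite enormE sqrtr_ge0. Qed.

Lemma enorm_sq (x : V) : enorm x ^+ 2 = dot x x.
Proof. by rewrite enormE sqr_sqrtr // dot_ge0. Qed.

Lemma enorm_eq0 (x : V) : enorm x = 0 -> x = 0.
Proof.
move=> /eqP; rewrite enormE sqrtr_eq0 => hx.
have d0 : dot x x = 0 by apply/eqP; rewrite eq_le hx dot_ge0.
have := psumr_eq0P (fun i _ => mul_self_ge0 (x ord0 i)) d0.
move=> H; apply/rowP => i; rewrite mxE; apply/eqP; rewrite -sqrf_eq0 expr2; apply/eqP.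
exact: H.
Qed.

Lemma enorm_gt0 (x : V) : x != 0 -> 0 < enorm x.
Proof.
move=> x0; rewrite lt_neqAle enorm_ge0 andbT eq_sym; apply/eqP => /enorm_eq0.
by move/eqP: x0.
Qed.

Lemma enorm0 : enorm (0 : V) = 0.
Proof.
rewrite enormE /dot (eq_bigr (fun _ => 0)) ?big1 ?sqrtr0 // => i _.
by rewrite mxE mul0r.
Qed.

Lemma dot_expand (x y : V) : dot x y =
  x ord0 ord0 * y ord0 ord0 + x ord0 (lift ord0 ord0) * y ord0 (lift ord0 ord0).
Proof. by rewrite /dot !big_ord_recl big_ord0 addr0. Qed.

Lemma cauchy_schwarz (x y : V) : dot x y ^+ 2 <= dot x x * dot y y.
Proof.
rewrite !dot_expand.
set a := x ord0 ord0; set b := x ord0 (lift ord0 ord0).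
set c := y ord0 ord0; set d := y ord0 (lift ord0 ord0).
have := sqr_ge0 (a * d - b * c); nra.
Qed.

Lemma dot_le (x y : V) : `|dot x y| <= enorm x * enorm y.
Proof.
rewrite -(ler_pXn2r (n := 2)) //; last by rewrite nnegrE mulr_ge0 // enorm_ge0.
by rewrite real_normK ?num_real // exprMn !enorm_sq cauchy_schwarz.
Qed.

Lemma coord_le (h : V) (i : 'I_2) : `|h ord0 i| <= `|h|.
Proof.
rewrite [leRHS]/Num.Def.normr /= mx_normrE.
apply: le_trans; last exact: (le_bigmax _ _ (ord0, i)).
by [].
Qed.

Lemma enorm_le (h : V) : enorm h <= 2 * `|h|.
Proof.
rewrite enormE -[X in _ <= X]ger0_norm ?mulr_ge0 // -sqrtr_sqr.
apply: ler_wsqrtr; rewrite /dot.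
apply: le_trans (_ : \sum_(i < 2) `|h| ^+ 2 <= _).
  apply: ler_sum => i _; rewrite -expr2 -real_normK ?num_real //.
  by rewrite lerXn2r // ?nnegrE // coord_le.
rewrite sumr_const card_ord exprMn.
have := normr_ge0 h; set n := `|h|; move=> n0.
rewrite -mulr_natr; nra.
Qed.

Lemma dot_linear (v : V) : linear (fun x : V => dot x v).
Proof.
move=> a x y; rewrite /dot scaler_sumr -big_split /=; apply: eq_bigr => i _.
by rewrite !mxE mulrDl /GRing.scale /= mulrA.
Qed.


Lemma cdot_cont (c : R) (v : V) : continuous (fun y : V => c * dot y v).
Proof.
move=> y; apply: (@continuousM R V (cst c) (fun y => dot y v)); first exact: cst_continuous.
have -> : (fun y : V => dot y v) = (fun y : V => y ord0 ord0) \* cst (v ord0 ord0) +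
   (fun y : V => y ord0 (lift ord0 ord0)) \* cst (v ord0 (lift ord0 ord0)).
  by apply/funext => z; rewrite dot_expand.
apply: continuousD; apply: continuousM; try exact: cst_continuous; exact: coord_continuous.
Qed.

Lemma cdot_lin (c : R) (v : V) : linear (fun y : V => c * dot y v).
Proof.
move=> a x y; rewrite /= (dot_linear v a x y) /= mulrDr /GRing.scale /=.
by rewrite !mulrA [c * a]mulrC.
Qed.

Definition cdotL (c : R) (v : V) : {linear V -> R} :=
  HB.pack (fun y : V => c * dot y v) (GRing.isLinear.Build _ _ _ _ _ (cdot_lin c v)).

Lemma cdot_diff (c : R) (v x : V) :
  differentiable (fun y : V => c * dot y v) x /\
  'd (fun y : V => c * dot y v) x = (fun y : V => c * dot y v) :> (V -> R).
Proof.
have Lc : continuous (cdotL c v) := cdot_cont c v.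
split; first exact: (linear_differentiable x Lc).
exact: (diff_lin x Lc).
Qed.

Lemma diff_est (f : V -> R) (x v : V) (c : R) :
  (forall e : R, 0 < e -> \forall h \near (0 : V), `|f (h + x) - f x - c * dot h v| <= e * enorm h) ->
  differentiable f x /\ (forall u, 'D_u f x = c * dot u v).
Proof.
move=> H.
have Lc : continuous (cdotL c v) := cdot_cont c v.
have dfL : f \o shift x = cst (f x) + cdotL c v +o_ (0 : V) (@id V).
  apply/eqaddoP => eps eps0.
  have := H (eps / 2) (divr_gt0 eps0 (ltr0n _ 2)); apply: filterS => h Hh.
  rewrite /= opprD addrA; apply: le_trans Hh _.
  have := enorm_le h; have := ltW eps0; nra.
have dL := diff_unique Lc dfL.
have df : differentiable f x by apply/diff_locallyP; rewrite dL; split.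
by split => // u; rewrite deriveE // dL.
Qed.

End Vec.


Section Omega.
Context {R : realType} (p mu : R) (eta : R -> R).
Hypotheses (hp : 1 < p) (hmu : 1 < mu)
  (heta_cont : {within `[0, +oo[, continuous eta})
  (heta_range : forall t : R, 0 <= t -> 0 <= eta t <= 1).
Notation leb := (@lebesgue_measure R).
Notation om := (omega p mu eta).
Notation w1 := (fun t : R => (1 + t) `^ (- mu)).
Notation w2 := (fun t : R => (1 + t) `^ (p - 2)).

Lemma w1_le_w2 (t : R) : 0 <= t -> w1 t <= w2 t.
Proof.
move=> t0; apply: ler_powR; first by rewrite lerDl.
by move: hp hmu; lra.
Qed.

Lemma om_bounds (t : R) : 0 <= t -> w1 t <= om t <= w2 t.
Proof.
move=> t0; move: (heta_range _ t0) (w1_le_w2 _ t0); rewrite /omega.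
set e := eta t; set a := (1 + t) `^ (- mu); set b := (1 + t) `^ (p - 2).
by move=> /andP[e0 e1] ab; apply/andP; split; nra.
Qed.

Lemma w1_gt0 (t : R) : 0 <= t -> 0 < w1 t.
Proof. by move=> t0; apply: powR_gt0; rewrite ltr_pwDl. Qed.

Lemma om_gt0 (t : R) : 0 <= t -> 0 < om t.
Proof. by move=> t0; apply: lt_le_trans (w1_gt0 _ t0) _; case/andP: (om_bounds _ t0). Qed.

Lemma om0 : om 0 = 1.
Proof. by rewrite /omega addr0 !powR1 !mulr1 subrKC. Qed.

Lemma om_within : {within `[0, +oo[, continuous om}.
Proof.
have cw (a : R) : {within `[0, +oo[, continuous (fun t : R => (1 + t) `^ a)}.
  apply: continuous_in_subspaceT => t; rewrite inE /= in_itv /= andbT => t0.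
  by apply: w_cont; apply: lt_le_trans t0; rewrite ltrN10.
have -> : om = (eta \* (fun t : R => (1 + t) `^ (- mu))) +
   ((cst 1 - eta) \* (fun t : R => (1 + t) `^ (p - 2))).
  by apply/funext => t; rewrite /omega.
move=> x; apply: continuousD; apply: continuousM.
- exact: heta_cont.
- exact: cw.
- by apply: continuousB; [exact: cst_continuous | exact: heta_cont].
- exact: cw.
Qed.

Lemma om_cont_in : {in `]0, +oo[, continuous om}.
Proof. by have /continuous_within_itvcyP [] := om_within. Qed.

Lemma om_right : om x @[x --> 0^'+] --> om 0.
Proof. by have /continuous_within_itvcyP [] := om_within. Qed.


Definition hfun (s : R) : R := Rintegral leb `[0, s] om.
Definition gfun (s : R) : R := Rintegral leb `[0, s] hfun.

Lemma om_within_b (b : R) : {within `[0, b], continuous om}.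
Proof.
apply: continuous_subspaceW om_within; apply: subset_itvl; by rewrite bnd_simp.
Qed.

Lemma om_int (b : R) : leb.-integrable `[0, b] (EFin \o om).
Proof.
by apply: continuous_compact_integrable; [exact: segment_compact | exact: om_within_b].
Qed.

Lemma h_der (s : R) : 0 < s -> derivable hfun s 1 /\ derive1 hfun s = om s.
Proof.
move=> s0; apply: (@continuous_FTC1_closed R om 0 s (s + 1)) => //.
- by rewrite ltrDl.
- exact: om_int.
- by apply: om_cont_in; rewrite in_itv /= andbT.
Qed.

Lemma h_within (b : R) : 0 <= b -> {within `[0, b], continuous hfun}.
Proof.
move=> b0; exact: (@parameterized_integral_continuous R 0 b om b0 (om_int b)).
Qed.

Lemma h_ge (s : R) : 0 <= s -> s * w1 s <= hfun s.
Proof.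
move=> s0; apply: Rint_ge => //; first exact: om_within_b.
move=> r /andP[r0 rs]; have /andP[h1 _] := om_bounds _ r0; apply: le_trans h1.
apply: powR_ge_base; [ | by rewrite ltr_pwDl | by rewrite lerD2l].
by move: hmu; lra.
Qed.


Lemma h0 : hfun 0 = 0.
Proof. by rewrite /hfun set_itv1 Rintegral_set1. Qed.

Definition Cst : R := 1 + (p - 1)^-1.

Lemma Cst_ge1 : 1 <= Cst.
Proof. by rewrite /Cst lerDl invr_ge0 subr_ge0 ltW. Qed.

Lemma w2_gt0 (t : R) : 0 <= t -> 0 < w2 t.
Proof. by move=> t0; apply: powR_gt0; rewrite ltr_pwDl. Qed.

Lemma h_le (s : R) : 0 <= s -> hfun s <= Cst * s * w2 s.
Proof.
move=> s0; have sw0 : 0 <= s * w2 s by rewrite mulr_ge0 // ltW // w2_gt0.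
have C1 := Cst_ge1.
have [p2|p2] := leP 2 p.
  apply: le_trans (_ : s * w2 s <= _); last by rewrite -mulrA ler_peMl.
  apply: Rint_le => //; first exact: om_within_b.
  move=> r /andP[r0 rs]; have /andP[_ h2] := om_bounds _ r0; apply: le_trans h2 _.
  by apply: powR_le_base; [rewrite subr_ge0 | rewrite ltr_pwDl | rewrite lerD2l].
set k := (p - 1)^-1.
have k0 : 0 < k by rewrite /k invr_gt0 subr_gt0.
pose f := (k \*: (fun y : R => (1 + y) `^ (p - 1))) - hfun.
have fd (x : R) : 0 < x -> derivable f x 1 /\ 'D_1 f x = w2 x - om x.
  move=> x0; have hw := is_derive_w (p - 1) x (lt_trans (ltrN10 R) x0).
  have [hd hd'] := h_der x x0.
  have hwd := @ex_derive _ _ _ _ _ _ _ hw.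
  split; first by apply: derivableB; [exact: derivableZ | exact: hd].
  rewrite deriveB; [|exact: derivableZ | exact: hd].
  rewrite deriveZ // derive_val -derive1E hd'; congr (_ - _).
  rewrite /k [in RHS](_ : p - 2 = p - 1 - 1); last by ring.
  by rewrite /GRing.scale /= mulrA mulVf ?mul1r // subr_eq0 gt_eqF.
have fmono := @ger0_derive1_ndecr R f 0 s.
have : k * (1 + 0) `^ (p - 1) - hfun 0 <= k * (1 + s) `^ (p - 1) - hfun s.
  apply: fmono => //.
  - by move=> x; rewrite in_itv /= => /andP[x0 _]; case: (fd x x0).
  - move=> x; rewrite in_itv /= => /andP[x0 _]; rewrite derive1E; case: (fd x x0) => _ ->.
    by rewrite subr_ge0; have /andP[] := om_bounds _ (ltW x0).
  - move=> x; apply: continuousB; last exact: h_within.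
    apply: (continuous_in_subspaceT (A := `[0, s])) => y; rewrite inE /= in_itv /= => /andP[y0 _].
    apply: continuousZl_tmp; apply: w_cont; apply: lt_le_trans y0; exact: ltrN10.
rewrite h0 addr0 powR1 mulr1 subr0.
rewrite [in X in X - _](_ : p - 1 = (p - 2) + 1); last by ring.
rewrite powRD; last by apply/implyP => _; rewrite gt_eqF // ltr_pwDl.
rewrite powRr1; last by rewrite addr_ge0.
have w21 : (1 + s) `^ (p - 2) <= 1.
  rewrite -[X in _ <= X](powRr0 (1 + s)); apply: ler_powR; first by rewrite lerDl.
  by rewrite subr_le0 ltW.
have w0 := w2_gt0 _ s0; rewrite /Cst -/k.
move: w0 w21 sw0; set w := (1 + s) `^ (p - 2) => w0 w21 sw0 H.
have e1 : k * (w * (1 + s)) - k <= k * (s * w) by nra.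
nra.
Qed.

Lemma h_small (e : R) : 0 < e ->
  exists2 d : R, 0 < d & forall s, 0 <= s <= d -> `|hfun s - s| <= e * s.
Proof.
move=> e0; have := om_right; move/cvgrPdist_le => /(_ e e0).
rewrite near_withinE => /nbhs_ballP [d /= d0 Hd].
exists (d / 2); first by rewrite divr_gt0.
move=> s /andP[s0 sd].
have hb (r : R) : 0 <= r <= s -> 1 - e <= om r <= 1 + e.
  move=> /andP[r0 rs]; rewrite -om0.
  have : `|om 0 - om r| <= e.
    move: r0; rewrite le_eqVlt => /predU1P[<-|r0]; first by rewrite subrr normr0 ltW.
    apply: Hd => //; rewrite /ball /= sub0r normrN gtr0_norm //.
    apply: le_lt_trans (le_trans rs sd) _; rewrite ltr_pdivrMr // ltr_pMr //.
    by rewrite ltr1n.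
  by rewrite ler_norml => /andP[h1 h2]; apply/andP; split; lra.
have h1 : s * (1 - e) <= hfun s.
  apply: Rint_ge => //; first exact: om_within_b.
  by move=> r /hb /andP[].
have h2 : hfun s <= s * (1 + e).
  apply: Rint_le => //; first exact: om_within_b.
  by move=> r /hb /andP[].
rewrite ler_norml; apply/andP; split; nra.
Qed.

Lemma h_cont_at (s : R) : 0 < s -> {for s, continuous hfun}.
Proof.
by move=> s0; apply/differentiable_continuous/derivable1_diffP; case: (h_der s s0).
Qed.

Lemma h_int (b : R) : 0 <= b -> leb.-integrable `[0, b] (EFin \o hfun).
Proof.
move=> b0; apply: continuous_compact_integrable; [exact: segment_compact | exact: h_within].
Qed.

Lemma g_der (s : R) : 0 < s -> derivable gfun s 1 /\ derive1 gfun s = hfun s.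
Proof.
move=> s0; apply: (@continuous_FTC1_closed R hfun 0 s (s + 1)) => //.
- by rewrite ltrDl.
- by apply: h_int; rewrite addr_ge0 // ltW.
- exact: h_cont_at.
Qed.

Lemma h_ge0 (s : R) : 0 <= s -> 0 <= hfun s.
Proof. by move=> s0; apply: le_trans (h_ge s s0); rewrite mulr_ge0 // ltW // w1_gt0. Qed.

Definition Wb : R := 2 `^ `|p - 2|.

Lemma w2_le_Wb (r : R) : 0 <= r <= 1 -> w2 r <= Wb.
Proof.
move=> /andP[r0 r1]; apply: (@le_trans _ _ ((1 + r) `^ `|p - 2|)).
  by apply: ler_powR; [rewrite lerDl | exact: ler_norm].
by apply: powR_le_base; [ | rewrite ltr_pwDl | lra].
Qed.

Lemma g_ge0 (s : R) : 0 <= s -> 0 <= gfun s.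
Proof.
move=> s0; rewrite -(mulr0 s); apply: Rint_ge => //; first exact: h_within.
by move=> r /andP[r0 _]; apply: h_ge0.
Qed.

Lemma g_le (s : R) : 0 <= s <= 1 -> gfun s <= s * (s * (Cst * Wb)).
Proof.
move=> /andP[s0 s1]; apply: Rint_le => //; first exact: h_within.
move=> r /andP[r0 rs]; apply: le_trans (h_le r r0) _.
have w2r : w2 r <= Wb by apply: w2_le_Wb; rewrite r0 (le_trans rs s1).
have C1 := Cst_ge1; have w2p := w2_gt0 r r0.
have Wb0 : 0 <= Wb by exact: powR_ge0.
rewrite mulrA [s * Cst]mulrC; apply: ler_pM => //.
- by rewrite mulr_ge0 // (le_trans _ C1).
- exact: ltW.
- by rewrite ler_wpM2l // (le_trans _ C1).
Qed.


Notation V := 'rV[R]_2.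

Lemma near0_enorm (d : R) : 0 < d -> \forall h \near (0 : V), enorm h <= d.
Proof.
move=> d0; apply/nbhs_ballP; exists (d / 2); first by apply: divr_gt0.
move=> h; rewrite -ball_normE /= sub0r normrN => hd.
apply: le_trans (enorm_le h) _; rewrite -ler_pdivlMl // mulrC ltW //.
Qed.

Lemma dotC (x y : V) : dot x y = dot y x.
Proof. by rewrite !dot_expand mulrC [x _ _ * _]mulrC. Qed.

Lemma Dcomp (f : R -> R) (g : V -> R) (x v : V) :
  differentiable g x -> derivable f (g x) 1 ->
  'D_v (f \o g) x = 'D_v g x * derive1 f (g x).
Proof.
move=> dg /derivable1_diffP df.
rewrite deriveE; last exact: differentiable_comp.
by rewrite diff_comp // /= diff1E // deriveE.
Qed.

Lemma q_diff (x : V) : differentiable (fun y : V => dot y y) x /\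
  (forall u, 'D_u (fun y : V => dot y y) x = 2 * dot u x).
Proof.
apply: diff_est => e e0; have := near0_enorm _ e0; apply: filterS => h he.
have -> : dot (h + x) (h + x) - dot x x - 2 * dot h x = dot h h.
  by rewrite !dot_expand !mxE; ring.
by rewrite -enorm_sq ger0_norm ?sqr_ge0 // expr2 ler_wpM2r // ?enorm_ge0.
Qed.

Lemma n_diff (x : V) : x != 0 -> differentiable (@enorm R) x /\
  forall v, 'D_v (@enorm R) x = dot x v / enorm x.
Proof.
move=> x0; have [dq Dq] := q_diff x.
have E : @enorm R = Num.sqrt \o (fun y : V => dot y y).
  by apply/funext => y; rewrite /= enormE.
have n0 := enorm_gt0 _ x0.
have q0 : 0 < dot x x by rewrite -enorm_sq exprn_gt0.
have hs := is_derive1_sqrt q0.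
have ds : derivable Num.sqrt (dot x x) 1 := @ex_derive _ _ _ _ _ _ _ hs.
split; first by rewrite E; apply: differentiable_comp => //; exact/derivable1_diffP.
move=> v; rewrite E Dcomp // Dq derive1E (@derive_val _ _ _ _ _ _ _ hs) /= -enormE dotC.
by field; rewrite gt_eqF.
Qed.

Notation G := (Gfun p mu eta).

Lemma G_eq : G = gfun \o @enorm R.
Proof. by apply/funext => x. Qed.

Lemma g0 : gfun 0 = 0.
Proof. by rewrite /gfun set_itv1 Rintegral_set1. Qed.

Lemma G_diff_ne0 (x : V) : x != 0 -> differentiable G x /\
  forall v, 'D_v G x = hfun (enorm x) * dot x v / enorm x.
Proof.
move=> x0; have [dn Dn] := n_diff x x0; have n0 := enorm_gt0 _ x0.
have [dg g'] := g_der (enorm x) n0.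
rewrite G_eq; split; first by apply: differentiable_comp => //; exact/derivable1_diffP.
by move=> v; rewrite Dcomp // Dn g' mulrC mulrA.
Qed.

Lemma G_diff0 : differentiable G 0 /\ forall v, 'D_v G 0 = 0.
Proof.
have M0 : 0 < Cst * Wb.
  by rewrite mulr_gt0 // ?(lt_le_trans _ Cst_ge1) // powR_gt0.
suff H : forall e : R, 0 < e -> \forall h \near (0 : V),
    `|G (h + 0) - G 0 - 0 * dot h 0| <= e * enorm h.
  have [dG DG] := @diff_est R G 0 0 0 H.
  by split => // v; rewrite DG mul0r.
move=> e e0.
have m0 : 0 < Num.min 1 (e / (Cst * Wb)) by rewrite lt_min ltr01 divr_gt0.
have := near0_enorm _ m0; apply: filterS => h.
rewrite le_min => /andP[h1 h2].
rewrite mul0r subr0 addr0 G_eq /= enorm0 g0 subr0.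
have hn := enorm_ge0 h.
rewrite ger0_norm; last exact: g_ge0.
apply: le_trans (g_le (enorm h) _) _; first by rewrite hn h1.
rewrite mulrC ler_wpM2r //.
by rewrite -ler_pdivlMr.
Qed.

Definition Fv (v y : V) : R := hfun (enorm y) * dot y v / enorm y.

Lemma DG_eq (v : V) : 'D_v G = Fv v.
Proof.
apply/funext => y; have [->|y0] := eqVneq y 0.
  by rewrite (proj2 G_diff0) /Fv enorm0 invr0 mulr0.
exact: (proj2 (G_diff_ne0 y y0)).
Qed.

Lemma dot_diff (v x : V) : differentiable (fun y : V => dot y v) x /\
  forall u, 'D_u (fun y : V => dot y v) x = 1 * dot u v.
Proof.
apply: diff_est => e e0; apply: filterE => h.
have -> : dot (h + x) v - dot x v - 1 * dot h v = 0.
  by rewrite !dot_expand !mxE; ring.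
by rewrite normr0 mulr_ge0 ?enorm_ge0 // ltW.
Qed.

Lemma Fv_ne0 (v x : V) : x != 0 -> differentiable (Fv v) x /\
  forall u, 'D_u (Fv v) x = om (enorm x) * (dot x u * dot x v) / enorm x ^+ 2 +
     hfun (enorm x) / enorm x * (dot u v - dot x u * dot x v / enorm x ^+ 2).
Proof.
move=> x0; have [dn Dn] := n_diff x x0; have n0 := enorm_gt0 _ x0.
have [dh h'] := h_der (enorm x) n0.
have [dd Dd] := dot_diff v x.
have dhn : differentiable (hfun \o @enorm R) x.
  by apply: differentiable_comp => //; exact/derivable1_diffP.
have dni : differentiable (fun y : V => (enorm y)^-1) x.
  by apply: differentiableV => //; rewrite gt_eqF.
have -> : Fv v = ((hfun \o @enorm R) * (fun y : V => dot y v)) * (fun y : V => (enorm y)^-1).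
  by apply/funext => y.
split.
  by apply: differentiableM => //; apply: differentiableM.
move=> u.
rewrite deriveM; [ | by apply: diff_derivable; apply: differentiableM | exact: diff_derivable].
rewrite deriveM; [ | exact: diff_derivable | exact: diff_derivable].
rewrite deriveV; [ | by rewrite gt_eqF | exact: diff_derivable].
rewrite (Dcomp hfun (@enorm R) x u dn dh) Dn h' Dd /GRing.scale /=.
have -> : ((hfun \o @enorm R) * (fun y : V => dot y v)) x = hfun (enorm x) * dot x v by [].
by field; rewrite gt_eqF.
Qed.

Lemma dot0l (v : V) : dot 0 v = 0.
Proof. by rewrite dot_expand !mxE !mul0r addr0. Qed.

Lemma Fv_0 (v : V) : differentiable (Fv v) 0 /\ forall u, 'D_u (Fv v) 0 = 1 * dot u v.
Proof.
apply: diff_est => e e0.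
set nv := enorm v; have nv0 : 0 <= nv := enorm_ge0 v.
set e' := e / (nv + 1).
have e'0 : 0 < e' by rewrite divr_gt0 // ltr_pwDr.
have ee : e = e' * (nv + 1) by rewrite /e' divfK // gt_eqF // ltr_pwDr.
have [d d0 Hd] := h_small _ e'0.
have := near0_enorm _ d0; apply: filterS => h hd.
rewrite addr0 {2}/Fv enorm0 invr0 mulr0 subr0 mul1r /Fv.
have [->|h0] := eqVneq h 0.
  by rewrite enorm0 dot0l invr0 mulr0 subr0 normr0 mulr0.
have t0 := enorm_gt0 _ h0.
set t := enorm h; set b := dot h v; set H := hfun t.
have E : H * b / t - b = (H - t) * b / t by field; rewrite gt_eqF.
rewrite E normrM normfV (gtr0_norm t0) ler_pdivrMr //.
have hs : `|H - t| <= e' * t by apply: Hd; rewrite (ltW t0) hd.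
have hb : `|b| <= t * nv by exact: dot_le.
rewrite normrM -/t; apply: le_trans (ler_pM (normr_ge0 _) (normr_ge0 _) hs hb) _.
have := mulr_ge0 (mulr_ge0 (ltW t0) (ltW t0)) (ltW e'0).
rewrite ee; nra.
Qed.

Lemma DD_bounds (x z : V) : x != 0 ->
  w1 (enorm x) * dot z z <= 'D_z (Fv z) x <= Cst * w2 (enorm x) * dot z z.
Proof.
move=> x0; have [_ ->] := Fv_ne0 z x x0.
have t0 := enorm_gt0 _ x0; have tt := ltW t0.
have /andP[om1 om2] := om_bounds _ tt.
have hg := h_ge _ tt; have hl := h_le _ tt.
have C1 := Cst_ge1; have w10 := w1_gt0 _ tt.
have cs := cauchy_schwarz x z; rewrite -enorm_sq in cs.
have a0 : 0 <= dot z z := dot_ge0 z.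
move: om1 om2 hg hl cs w10.
set t := enorm x; set a := dot z z; set b := dot x z; set o := om t; set H := hfun t.
set W1 := (1 + t) `^ (- mu); set W2 := (1 + t) `^ (p - 2) => om1 om2 hg hl cs w10.
rewrite expr2 in cs.
have t20 : 0 < t ^+ 2 by rewrite exprn_gt0.
set be := b * b / t ^+ 2.
have be0 : 0 <= be by rewrite divr_ge0 // mul_self_ge0 // ltW.
have bea : be <= a by rewrite /be ler_pdivrMr // [a * _]mulrC.
set u := H / t.
have u1 : W1 <= u by rewrite /u ler_pdivlMr // mulrC.
have u2 : u <= Cst * W2 by rewrite /u ler_pdivrMr // mulrAC; move: hl; rewrite mulrAC.
have -> : o * (b * b) / t ^+ 2 = o * be by rewrite /be !mulrA.
have W12 : W2 <= Cst * W2 by rewrite ler_peMl // (le_trans (ltW w10)) // (le_trans om1).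
apply/andP; split; nra.
Qed.

Lemma main_result : exists c5 c6 : R, 0 < c5 /\ 0 < c6 /\
    (forall xi : 'rV[R]_2,
       differentiable (Gfun p mu eta) xi /\
       forall v : 'rV[R]_2, differentiable ('D_v (Gfun p mu eta)) xi) /\
    (forall xi zeta : 'rV[R]_2,
       c5 * (1 + enorm xi) `^ (- mu) * enorm zeta ^+ 2
         <= 'D_zeta ('D_zeta (Gfun p mu eta)) xi /\
       'D_zeta ('D_zeta (Gfun p mu eta)) xi
         <= c6 * (1 + enorm xi) `^ (p - 2) * enorm zeta ^+ 2).
Proof.
exists 1, Cst; split; first exact: ltr01.
split; first exact: lt_le_trans ltr01 Cst_ge1.
split.
  move=> xi; split.
    have [->|x0] := eqVneq xi 0; first exact: (proj1 G_diff0).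
    exact: (proj1 (G_diff_ne0 xi x0)).
  move=> v; rewrite DG_eq; have [->|x0] := eqVneq xi 0; first exact: (proj1 (Fv_0 v)).
  exact: (proj1 (Fv_ne0 v xi x0)).
move=> xi zeta; rewrite DG_eq enorm_sq mul1r.
have [->|x0] := eqVneq xi 0.
  rewrite (proj2 (Fv_0 zeta)) mul1r enorm0 addr0 !powR1 /= mul1r mulr1; split => //.
  by rewrite ler_peMl ?Cst_ge1 // dot_ge0.
by have /andP[l u] := DD_bounds xi zeta x0; split.
Qed.

End Omega.

Theorem proposition5p4 (R : realType) (p mu : R) (eta : R -> R)
  (hp : 1 < p) (hmu : 1 < mu)
  (heta_cont : {within `[0, +oo[, continuous eta})
  (heta_range : forall t : R, 0 <= t -> 0 <= eta t <= 1) :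
  exists c5 c6 : R, 0 < c5 /\ 0 < c6 /\
    (forall xi : 'rV[R]_2,
       differentiable (Gfun p mu eta) xi /\
       forall v : 'rV[R]_2, differentiable ('D_v (Gfun p mu eta)) xi) /\
    (forall xi zeta : 'rV[R]_2,
       c5 * (1 + enorm xi) `^ (- mu) * enorm zeta ^+ 2
         <= 'D_zeta ('D_zeta (Gfun p mu eta)) xi /\
       'D_zeta ('D_zeta (Gfun p mu eta)) xi
         <= c6 * (1 + enorm xi) `^ (p - 2) * enorm zeta ^+ 2).
Proof. have := @main_result R p mu eta hp hmu heta_cont heta_range. exact. Qed.
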